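(* Let $W\colon \mathrm{GL}^+(2)\to\mathbb{R}$ be a rank-one convex isotropic energy function with an additive volumetric-isochoric split, i.e. there are functions $h,f\colon(0,\infty)\to\mathbb{R}$ with $h(t)=h(1/t)$ for all $t>0$ such that \[ W(F)=h\!\left(\frac{\lambda_1}{\lambda_2}\right)+f(\lambda_1\lambda_2)\qquad\text{for all }F\in\mathrm{GL}^+(2), \] where $\lambda_1,\lambda_2>0$ are the singular values of $F$. Then $h$ is convex on $(0,\infty)$ or $f$ is convex on $(0,\infty)$.
   Context: $\mathrm{GL}^+(2)=\{F\in\mathbb{R}^{2\times2}:\det F>0\}$. $W$ is isotropic (and objective) if $W(R_1FR_2)=W(F)$ for all $R_1\in\mathrm{SO}(2)$, $R_2\in\mathrm{O}(2)$. A function $W\colon\mathrm{GL}^+(2)\to\mathbb{R}$ is called rank-one convex if its extension $\widehat W\colon\mathbb{R}^{2\times2}\to\mathbb{R}\cup\{+\infty\}$, $\widehat W=W$ on $\mathrm{GL}^+(2)$ and $\widehat W=+\infty$ otherwise, satisfies $\widehat W(tF_1+(1-t)F_2)\le t\widehat W(F_1)+(1-t)\widehat W(F_2)$ for all $F_1,F_2$ with $\operatorname{rank}(F_1-F_2)=1$ and $t\in(0,1)$. *)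

(* Defs.v *)
From HB Require Import structures.
From mathcomp Require Import all_boot all_order all_algebra.
From mathcomp Require Import reals constructive_ereal.
Set Implicit Arguments. Unset Strict Implicit. Unset Printing Implicit Defensive.
Import Order.TTheory GRing.Theory Num.Theory.
Local Open Scope ring_scope.

Section Defs.
Variable R : realType.

Definition orth2 (A : 'M[R]_2) : Prop := A *m A^T = 1%:M.
Definition rot2 (A : 'M[R]_2) : Prop := orth2 A /\ \det A = 1.

Definition diag2 (l1 l2 : R) : 'M[R]_2 :=
  \matrix_(i < 2, j < 2) (if i == j then (if i == 0 :> nat then l1 else l2) else 0).

Definition singular_values (F : 'M[R]_2) (l1 l2 : R) : Prop :=
  0 <= l1 /\ 0 <= l2 /\
  exists U V : 'M[R]_2, orth2 U /\ orth2 V /\ F = U *m diag2 l1 l2 *m V.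

Definition Wext (W : 'M[R]_2 -> R) (F : 'M[R]_2) : \bar R :=
  if 0 < \det F then (W F)%:E else +oo%E.

Definition rank_one_convex (W : 'M[R]_2 -> R) : Prop :=
  forall F1 F2 : 'M[R]_2, \rank (F1 - F2) = 1%N ->
  forall t : R, 0 < t < 1 ->
    (Wext W (t *: F1 + (1 - t) *: F2) <= t%:E * Wext W F1 + (1 - t)%:E * Wext W F2)%E.

Definition isotropic (W : 'M[R]_2 -> R) : Prop :=
  forall F R1 R2 : 'M[R]_2, 0 < \det F -> rot2 R1 -> orth2 R2 ->
    0 < \det (R1 *m F *m R2) -> W (R1 *m F *m R2) = W F.

Definition convex_on_pos (g : R -> R) : Prop :=
  forall x y : R, 0 < x -> 0 < y -> forall t : R, 0 < t < 1 ->
    g (t * x + (1 - t) * y) <= t * g x + (1 - t) * g y.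
End Defs.

(* Main.v *)
Require Import Defs.
From HB Require Import structures.
From mathcomp Require Import all_boot all_order all_algebra.
From mathcomp Require Import reals constructive_ereal.
From mathcomp Require Import all_classical all_reals all_analysis.
From mathcomp Require Import ring lra.
From Stdlib Require Import Classical_Prop.
Import Order.TTheory GRing.Theory Num.Theory.
Import numFieldNormedType.Exports.
Set Implicit Arguments. Unset Strict Implicit. Unset Printing Implicit Defensive.
Local Open Scope ring_scope.

Section M.
Variable R : realType.
Definition mk22 (a b c d : R) : 'M[R]_2 :=
  \matrix_(i < 2, j < 2) if i == 0 then (if j == 0 then a else b) else (if j == 0 then c else d).

Lemma mk22E (A : 'M[R]_2) : A = mk22 (A 0 0) (A 0 1) (A 1 0) (A 1 1).
Proof.
apply/matrixP => i j; rewrite !mxE.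
by case: i => [[|[|//]] ?]; case: j => [[|[|//]] ?]; congr (A _ _); apply/val_inj.
Qed.

Lemma mk22_eq a b c d a' b' c' d' : a = a' -> b = b' -> c = c' -> d = d' ->
  mk22 a b c d = mk22 a' b' c' d'.
Proof. by move=> -> -> -> ->. Qed.

Lemma mk22_mul a b c d a' b' c' d' :
  mk22 a b c d *m mk22 a' b' c' d' =
  mk22 (a*a' + b*c') (a*b' + b*d') (c*a'+d*c') (c*b'+d*d').
Proof.
apply/matrixP => i j; rewrite !mxE !big_ord_recl big_ord0 !mxE /=.
by case: i => [[|[|//]] ?]; case: j => [[|[|//]] ?]; rewrite /= addr0.
Qed.

Lemma mk22_add a b c d a' b' c' d' :
  mk22 a b c d + mk22 a' b' c' d' = mk22 (a+a') (b+b') (c+c') (d+d').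
Proof.
by apply/matrixP => i j; rewrite !mxE; case: i => [[|[|//]] ?]; case: j => [[|[|//]] ?].
Qed.

Lemma mk22_opp a b c d : - mk22 a b c d = mk22 (-a) (-b) (-c) (-d).
Proof.
by apply/matrixP => i j; rewrite !mxE; case: i => [[|[|//]] ?]; case: j => [[|[|//]] ?].
Qed.

Lemma mk22_scale k a b c d : k *: mk22 a b c d = mk22 (k*a) (k*b) (k*c) (k*d).
Proof.
by apply/matrixP => i j; rewrite !mxE; case: i => [[|[|//]] ?]; case: j => [[|[|//]] ?].
Qed.

Lemma mk22_tr a b c d : (mk22 a b c d)^T = mk22 a c b d.
Proof.
by apply/matrixP => i j; rewrite !mxE; case: i => [[|[|//]] ?]; case: j => [[|[|//]] ?].
Qed.

Lemma mk22_1 : (1%:M : 'M[R]_2) = mk22 1 0 0 1.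
Proof.
by apply/matrixP => i j; rewrite !mxE; case: i => [[|[|//]] ?]; case: j => [[|[|//]] ?].
Qed.

Lemma diag2E x y : diag2 x y = mk22 x 0 0 y.
Proof.
by apply/matrixP => i j; rewrite !mxE; case: i => [[|[|//]] ?]; case: j => [[|[|//]] ?].
Qed.

Lemma delta00E : (delta_mx 0 0 : 'M[R]_2) = mk22 1 0 0 0.
Proof.
by apply/matrixP => i j; rewrite !mxE; case: i => [[|[|//]] ?]; case: j => [[|[|//]] ?].
Qed.

Lemma delta01E : (delta_mx 0 1 : 'M[R]_2) = mk22 0 1 0 0.
Proof.
by apply/matrixP => i j; rewrite !mxE; case: i => [[|[|//]] ?]; case: j => [[|[|//]] ?].
Qed.

Lemma det_mk22 a b c d : \det (mk22 a b c d) = a * d - b * c.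
Proof.
rewrite (expand_det_row _ 0) !big_ord_recl big_ord0 /cofactor !det_mx11 !mxE /=.
rewrite /= !expr0 !expr1; ring.
Qed.

Lemma rank_mk22_00 k : k != 0 -> \rank (mk22 k 0 0 0) = 1%N.
Proof.
move=> k0; have -> : mk22 k 0 0 0 = k *: delta_mx 0 0.
  by rewrite delta00E mk22_scale; apply: mk22_eq; ring.
by rewrite mxrank_scale_nz // mxrank_delta.
Qed.

Lemma rank_mk22_01 k : k != 0 -> \rank (mk22 0 k 0 0) = 1%N.
Proof.
move=> k0; have -> : mk22 0 k 0 0 = k *: delta_mx 0 1.
  by rewrite delta01E mk22_scale; apply: mk22_eq; ring.
by rewrite mxrank_scale_nz // mxrank_delta.
Qed.
End M.

Section A.
Variable R : realType.
Definition cvx_in (P : R -> Prop) (g : R -> R) := forall x y, P x -> P y ->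
  forall t, 0 < t < 1 -> g (t * x + (1 - t) * y) <= t * g x + (1 - t) * g y.

Lemma cvx_step (P : R -> Prop) (g : R -> R) (x0 d l : R) : cvx_in P g -> P x0 -> P (x0 + d) -> P (x0 - d) -> P (x0 + l * d) ->
  0 < l <= 1 -> `|g (x0 + l * d) - g x0| <= l * (`|g (x0 + d) - g x0| + `|g (x0 - d) - g x0|).
Proof.
move=> cg P0 Pp Pm Pl /andP[l0 l1].
have up : g (x0 + l * d) - g x0 <= l * (g (x0 + d) - g x0).
  case: (ltrP l 1) => [lt1|ge1].
    have := cg (x0 + d) x0 Pp P0 l ltac:(by apply/andP).
    have -> : l * (x0 + d) + (1 - l) * x0 = x0 + l * d by ring.
    move=> H; lra.
  have -> : l = 1 by apply/eqP; rewrite eq_le l1 ge1.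
  by rewrite !mul1r.
have lo : g x0 - g (x0 + l * d) <= l * (g (x0 - d) - g x0).
  have t0 : 0 < (1 + l)^-1 by rewrite invr_gt0; lra.
  have t1 : (1 + l)^-1 < 1 by rewrite invf_lt1; lra.
  have := cg (x0 + l * d) (x0 - d) Pl Pm (1 + l)^-1 ltac:(by apply/andP).
  have -> : (1 + l)^-1 * (x0 + l * d) + (1 - (1 + l)^-1) * (x0 - d) = x0.
    by field; lra.
  have -> : 1 - (1 + l)^-1 = l * (1 + l)^-1 by field; lra.
  set u := (1 + l)^-1 in t0 t1 *.
  have hu : (1 + l) * u = 1 by rewrite /u mulfV //; lra.
  move=> H; have H2 := ler_wpM2l (_ : 0 <= 1 + l) H.
  have {H2} := H2 ltac:(lra).
  rewrite mulrDr mulrA hu (mulrC l u) mulrA (mulrA (1 + l)) hu !mul1r.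
  lra.
have l0' : 0 <= l by lra.
have hA : 0 <= l * (`|g (x0 + d) - g x0| - (g (x0 + d) - g x0)).
  by apply: mulr_ge0 => //; rewrite subr_ge0 ler_norm.
have hB : 0 <= l * (`|g (x0 - d) - g x0| - (g (x0 - d) - g x0)).
  by apply: mulr_ge0 => //; rewrite subr_ge0 ler_norm.
have hA' := mulr_ge0 l0' (normr_ge0 (g (x0 + d) - g x0)).
have hB' := mulr_ge0 l0' (normr_ge0 (g (x0 - d) - g x0)).
rewrite ler_norml; apply/andP; split; rewrite mulrDr; lra.
Qed.

Lemma cvx_cont (P : R -> Prop) (g : R -> R) (x0 r : R) : 0 < r -> (forall z, x0 - r <= z <= x0 + r -> P z) ->
  cvx_in P g -> {for x0, continuous g}.
Proof.
move=> r0 Pr cg.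
set K := `|g (x0 + r) - g x0| + `|g (x0 - r) - g x0|.
have K0 : 0 <= K by rewrite /K addr_ge0.
have bnd : forall s, `|s - x0| <= r -> `|g s - g x0| <= `|s - x0| / r * K.
  move=> s hs.
  have [hs1 hs2] : -r <= s - x0 /\ s - x0 <= r by move: hs; rewrite ler_norml => /andP.
  have P0 : P x0 by apply: Pr; lra.
  have Pp : P (x0 + r) by apply: Pr; lra.
  have Pm : P (x0 - r) by apply: Pr; lra.
  have Pp' : P (x0 + - r) by apply: Pr; lra.
  have Pm' : P (x0 - - r) by apply: Pr; lra.
  case: (ltrgtP s x0) => hsx.
  - have l0 : 0 < (x0 - s) / r by apply: divr_gt0; lra.
    have l1 : (x0 - s) / r <= 1 by rewrite ler_pdivrMr // mul1r; lra.
    have Ps : P (x0 + (x0 - s) / r * - r) by apply: Pr; rewrite mulrN mulfVK ?gt_eqF //; lra.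
    have := @cvx_step P g x0 (- r) ((x0 - s) / r) cg P0 Pp' Pm' Ps ltac:(by apply/andP).
    rewrite mulrN mulfVK ?gt_eqF // opprK.
    have -> : x0 + - (x0 - s) = s by ring.
    by rewrite /K (addrC `|g (x0 + r) - g x0|).
  - have l0 : 0 < (s - x0) / r by apply: divr_gt0; lra.
    have l1 : (s - x0) / r <= 1 by rewrite ler_pdivrMr // mul1r; lra.
    have Ps : P (x0 + (s - x0) / r * r) by apply: Pr; rewrite mulfVK ?gt_eqF //; lra.
    have := @cvx_step P g x0 r ((s - x0) / r) cg P0 Pp Pm Ps ltac:(by apply/andP).
    rewrite mulfVK ?gt_eqF //.
    have -> : x0 + (s - x0) = s by ring.
    by [].
  - by rewrite hsx !subrr normr0 !mul0r.
apply/cvgrPdist_lt => e e0.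
set del := Num.min r (e * r / (K + 1)).
have del0 : 0 < del.
  by rewrite /del lt_min r0 /= !divr_gt0 ?mulr_gt0 //; lra.
apply/nbhs_ballP; exists del => //= t; rewrite /ball /= => Ht.
have Hr : `|t - x0| <= r.
  rewrite distrC; apply: ltW; apply: (lt_le_trans Ht); by rewrite ge_min lexx.
rewrite distrC; apply: (le_lt_trans (bnd t Hr)).
have Hd : `|t - x0| < e * r / (K + 1).
  rewrite distrC; apply: (lt_le_trans Ht); by rewrite ge_min lexx orbT.
have K1 : 0 < K + 1 by lra. rewrite ltr_pdivlMr // in Hd.
rewrite mulrAC ltr_pdivrMr //.
have : `|t - x0| * K <= `|t - x0| * (K + 1) by apply: ler_wpM2l => //; lra.
lra.
Qed.
Lemma q_cont (c s a b eta : R) : continuous (fun z : R => c + s * (z - a) + eta * ((z - a) * (b - z))).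
Proof.
move=> z.
apply: cvgD; [apply: cvgD|].
- exact: cvg_cst.
- apply: cvgM; first exact: cvg_cst.
  apply: cvgB; [exact: cvg_id| exact: cvg_cst].
- apply: cvgM; first exact: cvg_cst.
  apply: cvgM; apply: cvgB; (exact: cvg_id || exact: cvg_cst).
Qed.

Lemma loc_ab (k : R -> R) (a b m : R) : (forall x, 0 < x -> {for x, continuous k}) ->
  0 < a -> a < m -> m < b -> k a * (b - m) + k b * (m - a) < k m * (b - a) ->
  exists z d0, 0 < d0 /\ d0 < z /\ forall d, 0 < d <= d0 -> k (z - d) + k (z + d) < 2 * k z.
Proof.
move=> ck a0 am mb gap.
set sg := (k b - k a) / (b - a).
have ba : b - a != 0 by rewrite subr_eq0 gt_eqF //; lra.
set gam := k m - (k a + sg * (m - a)).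
have gam0 : 0 < gam.
  rewrite /gam /sg.
  have -> : k a + (k b - k a) / (b - a) * (m - a) =
            (k a * (b - m) + k b * (m - a)) / (b - a) by field.
  rewrite subr_gt0 ltr_pdivrMr //; lra.
set eta := gam / (2 * ((m - a) * (b - m))).
have eta0 : 0 < eta by apply: divr_gt0 => //; apply: mulr_gt0; [lra|]; apply: mulr_gt0; lra.
set q := fun z : R => k a + sg * (z - a) + eta * ((z - a) * (b - z)).
set e := fun z => k z - q z.
have ce : ({within `[a, b], continuous e})%classic.
  apply: continuous_in_subspaceT => w; rewrite inE /= in_itv /= => /andP[wa wb].
  apply: continuousB; first by apply: ck; lra.
  exact: q_cont.
have [z zab zmax] := EVT_max (ltW (lt_trans am mb)) ce.
move: (zab); rewrite in_itv /= => /andP[za zb].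
have em : e m = gam / 2.
  have X0 : (m - a) * (b - m) != 0 by rewrite mulf_neq0 // subr_eq0 gt_eqF.
  rewrite /e /q /eta.
  have -> : gam / (2 * ((m - a) * (b - m))) * ((m - a) * (b - m)) = gam / 2.
    by field; rewrite !subr_eq0 !gt_eqF.
  by rewrite /gam; field.
have ea : e a = 0 by rewrite /e /q; ring.
have eb : e b = 0.
  rewrite /e /q /sg; field => //.
have ezm : e m <= e z by apply: zmax; rewrite in_itv /=; apply/andP; split; lra.
have ez0 : 0 < e z by apply: (lt_le_trans _ ezm); rewrite em; lra.
have az : a < z.
  rewrite lt_neqAle za andbT; apply/eqP => aze; move: ez0; rewrite -aze ea; lra.
have zb' : z < b.
  rewrite lt_neqAle zb andbT; apply/eqP => aze; move: ez0; rewrite aze eb; lra.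
exists z, (Num.min (z - a) (b - z)); split; [|split].
- by rewrite lt_min !subr_gt0 az zb'.
- rewrite gt_min; apply/orP; left; lra.
move=> d /andP[d0 dle].
have [d1 d2] : d <= z - a /\ d <= b - z by move: dle; rewrite le_min => /andP.
have e1 : e (z - d) <= e z by apply: zmax; rewrite in_itv /=; apply/andP; split; lra.
have e2 : e (z + d) <= e z by apply: zmax; rewrite in_itv /=; apply/andP; split; lra.
move: e1 e2; rewrite /e /q.
have : 0 < eta * (d * d) by apply: mulr_gt0 => //; apply: mulr_gt0.
nra.
Qed.

Lemma loc (k : R -> R) : (forall x, 0 < x -> {for x, continuous k}) ->
  ~ cvx_in (fun x => 0 < x) k ->
  exists z d0, 0 < d0 /\ d0 < z /\ forall d, 0 < d <= d0 -> k (z - d) + k (z + d) < 2 * k z.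
Proof.
move=> ck nc.
have [x [y [t [hx hy t0 t1 hlt]]]] : exists x y t, [/\ 0 < x, 0 < y, 0 < t, t < 1 &
    t * k x + (1 - t) * k y < k (t * x + (1 - t) * y)].
  apply: NNPP => H; apply: nc => x y hx hy t /andP[t0 t1]; rewrite leNgt; apply/negP => hlt.
  by apply: H; exists x, y, t.
case: (ltrgtP x y) => hxy.
- by apply: (@loc_ab k x y (t * x + (1 - t) * y)) => //; nra.
- by apply: (@loc_ab k y x (t * x + (1 - t) * y)) => //; nra.
- move: hlt; rewrite hxy.
  have -> : t * y + (1 - t) * y = y by ring.
  lra.
Qed.
End A.

Section Main.
Variable R : realType.

Lemma roc_line (W : 'M[R]_2 -> R) F1 F2 t : rank_one_convex W ->
  \rank (F1 - F2) = 1%N -> 0 < \det F1 -> 0 < \det F2 ->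
  0 < \det (t *: F1 + (1 - t) *: F2) -> 0 < t < 1 ->
  W (t *: F1 + (1 - t) *: F2) <= t * W F1 + (1 - t) * W F2.
Proof.
move=> roc rk d1 d2 d3 ht; have := roc F1 F2 rk t ht.
by rewrite /Wext d1 d2 d3 -!EFinM -EFinD lee_fin.
Qed.

Lemma sv_diag (x b : R) : 0 <= x -> 0 <= b -> singular_values (diag2 x b) x b.
Proof.
move=> hx hb; split => //; split => //; exists 1%:M, 1%:M.
rewrite /orth2 trmx1 !mul1mx mulmx1; split => //; split => //.
Qed.

Lemma cvx_ext (k1 k2 : R -> R) : (forall x, 0 < x -> k1 x = k2 x) ->
  cvx_in (fun x => 0 < x) k1 -> cvx_in (fun x => 0 < x) k2.
Proof.
move=> e c x y hx hy t /andP[t0 t1].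
have hm : 0 < t * x + (1 - t) * y.
  apply: addr_gt0; apply: mulr_gt0 => //; lra.
rewrite -!e //; apply: c => //; lra.
Qed.

Lemma diag_cvx (W : 'M[R]_2 -> R) (h f : R -> R) (b : R) : rank_one_convex W ->
  (forall (F : 'M[R]_2) (l1 l2 : R), 0 < \det F -> 0 < l1 -> 0 < l2 ->
     singular_values F l1 l2 -> W F = h (l1 / l2) + f (l1 * l2)) ->
  0 < b -> cvx_in (fun x => 0 < x) (fun x => h (x / b) + f (x * b)).
Proof.
move=> roc hW b0 x y hx hy t /andP[t0 t1].
have Wd : forall z, 0 < z -> W (diag2 z b) = h (z / b) + f (z * b).
  move=> z z0; apply: hW => //.
    by rewrite diag2E det_mk22 mul0r subr0 mulr_gt0.
  by apply: sv_diag; apply: ltW.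
have hm : 0 < t * x + (1 - t) * y.
  apply: addr_gt0; apply: mulr_gt0 => //; lra.
rewrite -!Wd //.
have -> : diag2 (t * x + (1 - t) * y) b = t *: diag2 x b + (1 - t) *: diag2 y b.
  by rewrite !diag2E !mk22_scale mk22_add; apply: mk22_eq; ring.
case: (eqVneq x y) => [exy|xy].
  rewrite -exy -scalerDl.
  have -> : t + (1 - t) = 1 by ring.
  rewrite scale1r -mulrDl.
  have -> : t + (1 - t) = 1 by ring.
  by rewrite mul1r.
apply: roc_line => //.
- rewrite !diag2E mk22_opp mk22_add.
  have -> : mk22 (x + - y) (0 + - 0) (0 + - 0) (b + - b) = mk22 (x - y) 0 0 0.
    by apply: mk22_eq; ring.
  by apply: rank_mk22_00; rewrite subr_eq0.
- by rewrite diag2E det_mk22 mul0r subr0 mulr_gt0.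
- by rewrite diag2E det_mk22 mul0r subr0 mulr_gt0.
- rewrite !diag2E !mk22_scale mk22_add det_mk22.
  have -> : (t * 0 + (1 - t) * 0) = 0 by ring.
  rewrite mul0r subr0; apply: mulr_gt0; first exact: hm.
  have -> : t * b + (1 - t) * b = b by ring.
  exact: b0.
- by apply/andP.
Qed.

Definition sh (s : R) := mk22 1 s 0 1.

Lemma det_sh s : \det (sh s) = 1.
Proof. by rewrite /sh det_mk22; ring. Qed.

Lemma shear_cvx (W : 'M[R]_2 -> R) : rank_one_convex W ->
  cvx_in (fun _ => True) (fun s => W (sh s)).
Proof.
move=> roc x y _ _ t /andP[t0 t1].
have -> : sh (t * x + (1 - t) * y) = t *: sh x + (1 - t) *: sh y.
  by rewrite /sh !mk22_scale mk22_add; apply: mk22_eq; ring.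
case: (eqVneq x y) => [exy|xy].
  rewrite -exy -scalerDl.
  have -> : t + (1 - t) = 1 by ring.
  rewrite scale1r -mulrDl.
  have -> : t + (1 - t) = 1 by ring.
  by rewrite mul1r.
apply: roc_line => //; rewrite ?det_sh ?ltr01 //.
- rewrite /sh mk22_opp mk22_add.
  have -> : mk22 (1 + - 1) (x + - y) (0 + - 0) (1 + - 1) = mk22 0 (x - y) 0 0.
    by apply: mk22_eq; ring.
  by apply: rank_mk22_01; rewrite subr_eq0.
- rewrite /sh !mk22_scale mk22_add det_mk22.
  have -> : t * 1 + (1 - t) * 1 = 1 by ring.
  have -> : t * 0 + (1 - t) * 0 = 0 by ring.
  by rewrite mulr0 subr0 mulr1 ltr01.
- by apply/andP.
Qed.

Lemma trZ (a : R) (A : 'M[R]_2) : (a *: A)^T = a *: A^T.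
Proof. by apply/matrixP => i j; rewrite !mxE. Qed.

Lemma sv_shear_n (p n : R) : 0 < p -> n * n = 1 + p * p -> n != 0 ->
  singular_values (sh (p - p^-1)) p p^-1.
Proof.
move=> p0 nn nz.
have pz : p != 0 by rewrite gt_eqF.
have q0 : 1 + p * p != 0 by rewrite gt_eqF // addr_gt0 // mulr_gt0.
have mm : n^-1 * n^-1 = (1 + p * p)^-1 by rewrite -invfM nn.
split; first exact: ltW.
split; first by rewrite invr_ge0 ltW.
exists (n^-1 *: mk22 p (-1) 1 p), (n^-1 *: mk22 1 p (- p) 1).
split; [|split].
- rewrite /orth2 trZ -scalemxAl -scalemxAr scalerA mm mk22_tr mk22_mul mk22_scale mk22_1.
  by apply: mk22_eq; field.
- rewrite /orth2 trZ -scalemxAl -scalemxAr scalerA mm mk22_tr mk22_mul mk22_scale mk22_1.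
  by apply: mk22_eq; field.
- rewrite -!scalemxAl -scalemxAr scalerA mm diag2E !mk22_mul mk22_scale /sh.
  by apply: mk22_eq; field; rewrite ?pz ?q0.
Qed.

Lemma sv_shear (p : R) : 0 < p -> singular_values (sh (p - p^-1)) p p^-1.
Proof.
move=> p0.
have h1 : 0 <= 1 + p * p by apply: addr_ge0 => //; apply: mulr_ge0; apply: ltW.
apply: (@sv_shear_n p (Num.sqrt (1 + p * p))) => //.
  by rewrite -expr2 sqr_sqrtr.
by rewrite gt_eqF // sqrtr_gt0; apply: addr_gt0 => //; apply: mulr_gt0.
Qed.

End Main.

Theorem lemma3p3 (R : realType) (W : 'M[R]_2 -> R) (h f : R -> R) :
  rank_one_convex W ->
  isotropic W ->
  (forall t : R, 0 < t -> h t = h t^-1) ->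
  (forall (F : 'M[R]_2) (l1 l2 : R), 0 < \det F -> 0 < l1 -> 0 < l2 ->
     singular_values F l1 l2 -> W F = h (l1 / l2) + f (l1 * l2)) ->
  convex_on_pos h \/ convex_on_pos f.
Proof.
move=> roc _ _ hW.
set phi := fun s => W (sh s).
have phic : continuous phi.
  move=> s; apply: (@cvx_cont _ (fun _ => True) phi s 1) => //.
  exact: shear_cvx.
have hphi : forall u, 0 < u -> h u = phi (Num.sqrt u - (Num.sqrt u)^-1) - f 1.
  move=> u u0; have p0 : 0 < Num.sqrt u by rewrite sqrtr_gt0.
  rewrite /phi (hW _ (Num.sqrt u) (Num.sqrt u)^-1) ?det_sh ?ltr01 ?invr_gt0 //;
    last exact: sv_shear.
  rewrite invrK -expr2 sqr_sqrtr ?ltW // mulfV ?gt_eqF //.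
  by rewrite addrK.
set kh := fun u => phi (Num.sqrt u - (Num.sqrt u)^-1) - f 1.
set g1 := fun u => W (diag2 u 1).
have hg1 : forall u, 0 < u -> g1 u = h u + f u.
  move=> u u0; rewrite /g1 (hW _ u 1) ?divr1 ?mulr1 //.
    by rewrite diag2E det_mk22 mul0r subr0 mulr1.
  by apply: sv_diag; [apply: ltW|apply: ler01].
have g1cvx : cvx_in (fun x => 0 < x) g1.
  apply: (@cvx_ext R (fun x => h (x / 1) + f (x * 1))).
    by move=> x x0; rewrite hg1 // divr1 mulr1.
  by apply: (@diag_cvx R W h f 1) => //; exact: ltr01.
set kf := fun u => g1 u - kh u.
have khc : forall u, 0 < u -> {for u, continuous kh}.
  move=> u u0; apply: cvgB; last exact: cvg_cst.
  apply: (@continuous_comp _ _ _ (fun u => Num.sqrt u - (Num.sqrt u)^-1) phi); last exact: phic.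
  apply: cvgB; first exact: sqrt_continuous.
  apply: continuousV; last exact: sqrt_continuous.
  by rewrite gt_eqF // sqrtr_gt0.
have kfc : forall u, 0 < u -> {for u, continuous kf}.
  move=> u u0; apply: cvgB; last exact: khc.
  apply: (@cvx_cont _ (fun x => 0 < x) g1 u (u / 2)) => //.
    by rewrite divr_gt0.
  by move=> z /andP[z1 z2]; lra.
have ekh : forall u, 0 < u -> kh u = h u by move=> u u0; rewrite hphi.
have ekf : forall u, 0 < u -> kf u = f u.
  by move=> u u0; rewrite /kf ekh // hg1 //; ring.
case: (classic (convex_on_pos h)) => [ch|nch]; first by left.
case: (classic (convex_on_pos f)) => [cf|ncf]; first by right.
exfalso.
have nkh : ~ cvx_in (fun x => 0 < x) kh.
  move=> c; apply: nch; apply: (@cvx_ext R kh) => //.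
have nkf : ~ cvx_in (fun x => 0 < x) kf.
  move=> c; apply: ncf; apply: (@cvx_ext R kf) => //.
have [zh [dh [dh0 [dhz Hh]]]] := loc khc nkh.
have [zf [df [df0 [dfz Hf]]]] := loc kfc nkf.
have zh0 : 0 < zh by lra.
have zf0 : 0 < zf by lra.
set r := Num.min (dh / zh) (df / zf).
have r0 : 0 < r by rewrite lt_min !divr_gt0.
have rh : r <= dh / zh by rewrite ge_min lexx.
have rf : r <= df / zf by rewrite ge_min lexx orbT.
set d1 := r * zh.
set d2 := r * zf.
have d10 : 0 < d1 by rewrite mulr_gt0.
have d20 : 0 < d2 by rewrite mulr_gt0.
have d1le : d1 <= dh by rewrite /d1 -ler_pdivlMr.
have d2le : d2 <= df by rewrite /d2 -ler_pdivlMr.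
have := Hh d1 ltac:(by apply/andP).
have := Hf d2 ltac:(by apply/andP).
rewrite !ekh ?ekf; try lra.
move=> Ff Fh.
set b := Num.sqrt (zf / zh).
have b0 : 0 < b by rewrite sqrtr_gt0 divr_gt0.
have bb : b * b = zf / zh by rewrite -expr2 sqr_sqrtr // ltW // divr_gt0.
have bz : b != 0 by rewrite gt_eqF.
have G := @diag_cvx R W h f b roc hW b0 (b * (zh - d1)) (b * (zh + d1)).
have := G ltac:(apply: mulr_gt0 => //; lra) ltac:(apply: mulr_gt0 => //; lra) (1/2) ltac:(apply/andP; split; lra).
have -> : 1 / 2 * (b * (zh - d1)) + (1 - 1 / 2) * (b * (zh + d1)) = b * zh by field.
rewrite !(mulrC b) !mulfK //.
rewrite -!mulrA bb.
have -> : zh * (zf / zh) = zf by field; rewrite gt_eqF.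
have -> : (zh - d1) * (zf / zh) = zf - d2 by rewrite /d1 /d2; field; rewrite gt_eqF.
have -> : (zh + d1) * (zf / zh) = zf + d2 by rewrite /d1 /d2; field; rewrite gt_eqF.
lra.
Qed.
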